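(* Let $M$ and $N$ be positive integers with $N \le M$, and let $S=\{\vec b\in\mathbb{F}_2^M : H(\vec b)=N\}$, where $H(\vec b)$ denotes the Hamming weight. Then there exist a nonnegative integer $Q$ with $Q\le 2N\log_2 M$ and a binary $Q\times M$ matrix $\mathbf{G}$ over $\mathbb{F}_2$ such that the linear map $\vec b\mapsto \mathbf{G}\vec b$ (arithmetic mod 2) is injective on $S$.
   Context: A fermionic system with $M$ modes and $N$ particles has its particle-number-conserving Fock basis states labelled by the bitstrings in $S$ (occupation vectors of weight $N$). A ''linear (number-conserving) encoding'' into $Q$ qubits is a binary matrix $\mathbf{G}\in\mathbb{F}_2^{Q\times M}$ mapping $|\vec b\rangle\mapsto|\mathbf{G}\vec b\rangle$ that is injective on $S$; $Q$ is its qubit cost. Logarithms are base 2. *)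

(* Defs.v *)
From mathcomp Require Import all_boot all_algebra.
From Stdlib Require Import Reals.
Set Implicit Arguments. Unset Strict Implicit. Unset Printing Implicit Defensive.

Definition hamming_weight (M : nat) (b : 'cV['F_2]_M) : nat :=
  #|[set i : 'I_M | b i ord0 != GRing.zero]|.

Definition fixed_weight (M N : nat) : {set 'cV['F_2]_M} :=
  [set b | hamming_weight b == N].

Definition log2 (x : R) : R := (ln x / ln 2)%R.

(* Main.v *)
Require Import Defs.
From mathcomp Require Import all_boot all_algebra.
Import GRing.Theory.
Set Implicit Arguments. Unset Strict Implicit. Unset Printing Implicit Defensive.
Section Helpers.
Local Open Scope ring_scope.

Lemma F2_add (u : 'F_2) : u + u = 0.
Proof. by apply/val_inj; case: u => -[|[|k]] //. Qed.
Lemma F2_1 (u : 'F_2) : u != 0 -> u = 1.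
Proof. by case: u => -[|[|k]] // ? ?; apply/val_inj. Qed.

Definition tailv m (x : 'cV['F_2]_m.+1) : 'cV['F_2]_m := \col_i x (lift ord0 i) ord0.

Lemma wt_rec m (x : 'cV['F_2]_m.+1) :
  hamming_weight x = ((x ord0 ord0 != 0%R) + hamming_weight (tailv x))%N.
Proof.
rewrite /hamming_weight -!sum1_card.
rewrite !big_mkcond big_ord_recl /= !inE; congr (_ + _)%N.
by rewrite [RHS]big_mkcond; apply: eq_bigr => i _; rewrite !inE mxE.
Qed.

Definition vec_of m (A : {set 'I_m}) : 'cV['F_2]_m := \col_i (if i \in A then 1 else 0).

Lemma count_low m K :
  (#|[set x : 'cV['F_2]_m | (hamming_weight x <= K)%N]| <= m.+1 ^ K)%N.
Proof.
pose g (f : {ffun 'I_K -> option 'I_m}) := vec_of [set i | Some i \in codom f].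
apply: (@leq_trans #|[set g f | f in {: {ffun 'I_K -> option 'I_m}}]|).
  apply: subset_leq_card; apply/subsetP => x; rewrite inE => hx.
  set A := [set i | x i ord0 != 0].
  pose f : {ffun 'I_K -> option 'I_m} := [ffun j : 'I_K => nth None (map Some (enum A)) j].
  apply/imsetP; exists f => //.
  apply/matrixP => i j; rewrite (ord1 j) !mxE inE.
  have -> : (Some i \in codom f) = (i \in A).
    apply/codomP/idP.
      case=> j'; rewrite ffunE => h.
      case: (ltnP j' (size [seq Some i | i <- enum A])) => hj.
        have : Some i \in [seq Some i | i <- enum A] by rewrite h mem_nth.
        by rewrite (mem_map (@Some_inj _)) mem_enum.
      by rewrite nth_default in h.
    move=> hi.
    have hiK : (index i (enum A) < K)%N.
      by rewrite (leq_trans _ hx) // -[hamming_weight x]/#|A| cardE index_mem mem_enum.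
    exists (Ordinal hiK); rewrite ffunE /= (nth_map i) ?nth_index ?mem_enum //.
    by rewrite index_mem mem_enum.
  rewrite inE; case: eqP => [->|/eqP h] //.
  by rewrite (F2_1 h).
apply: leq_trans (leq_imset_card _ _) _. have := card_ffun (ordinal K) (option (ordinal m)); rewrite card_option !card_ord => <-; exact: leqnn.
Qed.

Lemma F2_vadd n p (v : 'M['F_2]_(n, p)) : v + v = 0.
Proof. by apply/matrixP => i j; rewrite !mxE F2_add. Qed.

Lemma leq_expb m n e : (m <= n)%N -> (m ^ e <= n ^ e)%N.
Proof. by move=> h; elim: e => // e IH; rewrite !expnS leq_mul. Qed.

Lemma build Q K M (hc : (M ^ K < 2 ^ Q)%N) : forall m, (m <= M)%N ->
  exists G : 'M['F_2]_(Q, m), forall x : 'cV['F_2]_m,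
    x != 0 -> (hamming_weight x <= K.+1)%N -> G *m x != 0.
Proof.
elim=> [_|m IH hm].
  by exists 0 => x; rewrite [x]flatmx0 eqxx.
have [G hG] := IH (ltnW hm).
pose F := [set G *m x | x in [set x : 'cV['F_2]_m | (hamming_weight x <= K)%N]].
have [c hcF] : exists c, c \notin F.
  case: (pickP (fun c => c \notin F)) => [c h|hnone]; first by exists c.
  have : (#|[set: 'cV['F_2]_Q]| <= #|F|)%N.
    apply: subset_leq_card; apply/subsetP => c _.
    by move: (hnone c) => /negbFE.
  rewrite cardsT card_mx card_Fp // muln1 => h1.
  have : (#|F| < 2 ^ Q)%N.
    apply: leq_ltn_trans (leq_imset_card _ _) _.
    apply: leq_ltn_trans (count_low m K) _.
    by apply: leq_ltn_trans hc; apply: leq_expb.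
  by rewrite ltnNge h1.
pose G' : 'M['F_2]_(Q, m.+1) := \matrix_(i, j)
  match unlift ord0 j with Some j' => G i j' | None => c i ord0 end.
exists G' => x hx hw.
have -> : G' *m x = x ord0 ord0 *: c + G *m tailv x.
  apply/matrixP => i k; rewrite (ord1 k) !mxE big_ord_recl !mxE unlift_none.
  congr (_ + _); first by rewrite mulrC.
  by apply: eq_bigr => j _; rewrite !mxE liftK.
move: hw; rewrite wt_rec.
case: (eqVneq (x ord0 ord0) 0) => h0 hw.
  rewrite h0 scale0r add0r; apply: hG => //.
  apply: contra hx => /eqP ht; apply/eqP/matrixP => i k; rewrite (ord1 k) mxE.
  case: (unliftP ord0 i) => [j ->|->] //.
  by have := congr1 (fun v : 'cV_m => v j ord0) ht; rewrite !mxE.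
rewrite (F2_1 h0) scale1r; apply: contra hcF => /eqP hs.
apply/imsetP; exists (tailv x); first by rewrite inE.
by rewrite -[c]addr0 -(F2_vadd (G *m tailv x)) addrA hs add0r.
Qed.

Lemma wt_sub M (b b' : 'cV['F_2]_M) :
  (hamming_weight (b - b') <= hamming_weight b + hamming_weight b')%N.
Proof.
rewrite /hamming_weight; apply: leq_trans (leq_card_setU _ _).
apply: subset_leq_card; apply/subsetP => i; rewrite !inE mxE.
apply: contraR; rewrite negb_or !negbK => /andP[/eqP h1 /eqP h2]; by rewrite mxE h1 h2 subrr.
Qed.

Lemma wt1 (b b' : 'cV['F_2]_1) : hamming_weight b = 1%N -> hamming_weight b' = 1%N -> b = b'.
Proof.
rewrite /hamming_weight => h h'; apply/matrixP => i j; rewrite !(ord1 i) !(ord1 j).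
have e : forall c : 'cV['F_2]_1, #|[set i : 'I_1 | c i ord0 != 0]| = 1%N -> c ord0 ord0 = 1.
  move=> c hc; apply: F2_1; have : [set i : 'I_1 | c i ord0 != 0] != set0 by rewrite -card_gt0 hc.
  case/set0Pn => k; rewrite inE (ord1 k) //.
by rewrite (e _ h) (e _ h').
Qed.
Lemma inj_of_good Q M N K (G : 'M['F_2]_(Q, M)) : K.+1 = (2 * N)%N ->
  (forall x : 'cV['F_2]_M, x != 0 -> (hamming_weight x <= K.+1)%N -> G *m x != 0) ->
  {in fixed_weight M N &, injective (fun b : 'cV['F_2]_M => mulmx G b)}.
Proof.
move=> hK hG b b'; rewrite !inE => /eqP hb /eqP hb' /= he.
apply/eqP; rewrite -subr_eq0; apply/negPn/negP => hne.
suff hw : (hamming_weight (b - b') <= K.+1)%N.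
  by have := hG _ hne hw; rewrite mulmxBr he subrr eqxx.
by rewrite hK (leq_trans (wt_sub b b')) // hb hb' mul2n addnn.
Qed.
End Helpers.

From Stdlib Require Import Reals Lra Lia.

Lemma INR_expn m n : INR (expn m n) = (INR m ^ n)%R.
Proof. elim: n => [|n IH]; first by []. by rewrite expnS -multE mult_INR IH. Qed.
Lemma ln_le' x y : (0 < x)%R -> (x <= y)%R -> (ln x <= ln y)%R.
Proof. move=> hx hxy; case: (Rle_lt_or_eq_dec _ _ hxy) => h.
  by apply: Rlt_le; apply: ln_increasing. by rewrite h; apply: Rle_refl. Qed.

Lemma real_bound Q M N : leq 2 M -> leq (expn 2 Q) (expn M (muln 2 N)) ->
  (INR Q <= 2 * INR N * log2 (INR M))%R.
Proof.
move=> hM hb.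
have h2 : (0 < ln 2)%R by rewrite -ln_1; apply: ln_increasing; lra.
have hM0 : (0 < INR M)%R by apply: lt_0_INR; apply/ltP; exact: ltnW hM.
have h := le_INR _ _ (elimT leP hb).
rewrite !INR_expn in h.
have := ln_le' (pow_lt _ Q (lt_0_INR 2 ltac:(lia))) h.
rewrite !ln_pow //; last by apply: lt_0_INR; apply/ltP.
rewrite -multE mult_INR.
have -> : INR 2 = 2%R by rewrite /= ; lra.
move=> hl; rewrite /log2.
apply: (Rmult_le_reg_r (ln 2)) => //.
have -> : (2 * INR N * (ln (INR M) / ln 2) * ln 2 = 2 * INR N * ln (INR M))%R by field; lra.
exact: hl.
Qed.

Theorem theorem1 (M N : nat) (hN : (0 < N)%N) (hNM : (N <= M)%N) :
  exists (Q : nat) (G : 'M['F_2]_(Q, M)),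
    (INR Q <= 2 * INR N * log2 (INR M))%R /\
    {in fixed_weight M N &, injective (fun b : 'cV['F_2]_M => mulmx G b)}.
Proof.
case: (leqP M 1) => hM.
  have eM : M = 1%N by apply/eqP; rewrite eqn_leq hM (leq_trans hN hNM).
  have eN : N = 1%N by apply/eqP; rewrite eqn_leq hN andbT -eM.
  subst M N; exists 0%N, (@GRing.zero _); split.
    by rewrite /log2 /= ln_1; lra.
  by move=> b b'; rewrite !inE => /eqP hb /eqP hb' _; apply: wt1.
pose K := (muln 2 N).-1.
have hK : K.+1 = muln 2 N by rewrite prednK // muln_gt0.
pose Q := trunc_log 2 (expn M (muln 2 N)).
have hMpos : leq 1 (expn M (muln 2 N)).
  by rewrite expn_gt0; apply/orP; left; apply: ltnW.
have hb1 : leq (expn 2 Q) (expn M (muln 2 N)) by apply: trunc_logP.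
have hb2 := trunc_log_ltn (expn M (muln 2 N)) (isT : leq 2 2).
have hc : leq (expn M K).+1 (expn 2 Q).
  have h3 : leq (muln 2 (expn M K)) (expn M (muln 2 N)).
    by rewrite -hK expnS leq_mul2r hM orbT.
  rewrite -(ltn_pmul2l (isT : leq 1 2)) -expnS.
  exact: leq_ltn_trans h3 hb2.
have [G hG] := build hc (leqnn M).
exists Q, G; split; last exact: (inj_of_good hK hG).
exact: real_bound.
Qed.
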